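(* For all $x\in[0,\infty)$, $$0\le\lim_{k\to\infty}\left|\frac{x\,\mathcal{P}_{k+1}(x)}{\mathcal{P}_k(x)}\right|\le 2,$$ where $\mathcal{P}_k(x)={}_2F_1\!\left(\frac{k}{2},\frac{k+1}{2};\frac{2k+3}{2};-x^2\right)$.
   Context: ${}_2F_1(a,b;c;z)$ denotes the Gauss hypergeometric function. *)

(* Defs.v *)
From Stdlib Require Import Reals Lra Factorial.
From Coquelicot Require Import Coquelicot.
Open Scope R_scope.

Fixpoint poch (a : R) (n : nat) : R :=
  match n with
  | O => 1
  | S m => poch a m * (a + INR m)
  end.

Definition hyp2f1_series (a b c z : R) : R :=
  Series (fun n => poch a n * poch b n / (poch c n * INR (fact n)) * z ^ n).

(* For |z| < 1 it is the power series; for z <= -1 it is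
   the analytic continuation, given by the Pfaff transformation
   2F1(a,b;c;z) = (1-z)^(-a) 2F1(a,c-b;c;z/(z-1)), with z/(z-1) in [1/2,1).
   Outside z < 1 the value is irrelevant here and set to 0. *)
Definition hyp2f1 (a b c z : R) : R :=
  if Rlt_dec (Rabs z) 1 then hyp2f1_series a b c z
  else if Rle_dec z (-1) then
    Rpower (1 - z) (- a) * hyp2f1_series a (c - b) c (z / (z - 1))
  else 0.

Definition Pk (k : nat) (x : R) : R :=
  hyp2f1 (INR k / 2) ((INR k + 1) / 2) ((2 * INR k + 3) / 2) (- x ^ 2).

(* Main.v *)
Require Import Defs.
From Stdlib Require Import Reals Lra Lia Factorial.
From Coquelicot Require Import Coquelicot.
Open Scope R_scope.

Lemma RInt_lin (f g : R -> R) (al be a b : R) : ex_RInt f a b -> ex_RInt g a b ->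
  RInt (fun x => al * f x - be * g x) a b = al * RInt f a b - be * RInt g a b.
Proof.
  intros Hf Hg. apply is_RInt_unique.
  apply (is_RInt_minus (V:=R_CompleteNormedModule) (fun x => al * f x) (fun x => be * g x)).
  - apply (is_RInt_scal (V:=R_CompleteNormedModule) f). now apply (RInt_correct (V:=R_CompleteNormedModule)).
  - apply (is_RInt_scal (V:=R_CompleteNormedModule) g). now apply (RInt_correct (V:=R_CompleteNormedModule)).
Qed.

Lemma RInt_add (f g : R -> R) (a b : R) : ex_RInt f a b -> ex_RInt g a b ->
  RInt (fun x => f x + g x) a b = RInt f a b + RInt g a b /\ ex_RInt (fun x => f x + g x) a b.
Proof.
  intros Hf Hg.
  assert (H : is_RInt (fun x => f x + g x) a b (RInt f a b + RInt g a b)).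
  { apply (is_RInt_plus (V:=R_CompleteNormedModule) f g).
    now apply (RInt_correct (V:=R_CompleteNormedModule)). now apply (RInt_correct (V:=R_CompleteNormedModule)). }
  split. now apply is_RInt_unique. eexists; eauto.
Qed.

Lemma RInt_sum (f : nat -> R -> R) a b N : (forall n, ex_RInt (f n) a b) ->
  sum_f_R0 (fun n => RInt (f n) a b) N = RInt (fun t => sum_f_R0 (fun n => f n t) N) a b
  /\ ex_RInt (fun t => sum_f_R0 (fun n => f n t) N) a b.
Proof.
  intros Hf. induction N.
  - simpl. split. reflexivity. apply Hf.
  - destruct IHN as [E X]. simpl. destruct (RInt_add _ _ a b X (Hf (S N))) as [E2 X2].
    rewrite E, E2. auto.
Qed.

Lemma series_RInt (f : nat -> R -> R) (F : R -> R) (m : nat -> R) a b :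
  a <= b -> (forall n, ex_RInt (f n) a b) -> ex_RInt F a b ->
  (forall n t, a <= t <= b -> Rabs (f n t) <= m n) -> ex_series m ->
  (forall t, a <= t <= b -> is_series (fun n => f n t) (F t)) ->
  is_series (fun n => RInt (f n) a b) (RInt F a b).
Proof.
  intros Hab Hf HF Hm Hms HS.
  assert (Hm0 : forall n, 0 <= m n).
  { intros n. apply Rle_trans with (Rabs (f n a)). apply Rabs_pos. apply Hm. lra. }
  set (T := fun N => Series m - sum_f_R0 m N).
  assert (HT : forall N t, a <= t <= b -> Rabs (F t - sum_f_R0 (fun n => f n t) N) <= T N).
  { intros N t Ht.
    assert (Hex : ex_series (fun n => f n t)) by (eexists; apply HS; auto).
    assert (Hexm : ex_series (fun k => m (S N + k)%nat)).
    { apply (ex_series_incr_n m (S N)). auto. }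
    assert (Hexa : ex_series (fun k => Rabs (f (S N + k)%nat t))).
    { apply (ex_series_le (V:=R_CompleteNormedModule) _ (fun k => m (S N + k)%nat)); auto.
      intros n. unfold norm; simpl. unfold abs; simpl. rewrite Rabs_Rabsolu. apply Hm; auto. }
    rewrite <- (is_series_unique _ _ (HS t Ht)).
    rewrite (Series_incr_n (fun n => f n t) (S N)) by (auto; lia). simpl pred.
    unfold T. rewrite (Series_incr_n m (S N)) by (auto; lia). simpl pred.
    replace (sum_f_R0 (fun n => f n t) N + Series (fun k => f (S N + k)%nat t) - sum_f_R0 (fun n => f n t) N)
      with (Series (fun k => f (S N + k)%nat t)) by ring.
    replace (sum_f_R0 m N + Series (fun k => m (S N + k)%nat) - sum_f_R0 m N)
      with (Series (fun k => m (S N + k)%nat)) by ring.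
    apply Rle_trans with (Series (fun k => Rabs (f (S N + k)%nat t))).
    apply Series_Rabs; auto.
    apply Series_le; auto. intros n. split. apply Rabs_pos. apply Hm; auto. }
  assert (HT0 : is_lim_seq T 0).
  { unfold T. replace (Finite 0) with (Finite (Series m - Series m)) by (f_equal; ring).
    apply is_lim_seq_minus'. apply is_lim_seq_const.
    apply is_lim_seq_Reals. apply is_series_Reals. apply Series_correct. auto. }
  apply is_series_Reals. intros eps Heps.
  apply is_lim_seq_Reals in HT0.
  destruct (HT0 (eps / (b - a + 1))) as [N0 HN0].
  { apply Rdiv_lt_0_compat; lra. }
  exists N0. intros N HN. unfold R_dist.
  destruct (RInt_sum f a b N Hf) as [E X]. rewrite E.
  replace (RInt (fun t => sum_f_R0 (fun n => f n t) N) a b - RInt F a b)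
    with (-(1 * RInt F a b - 1 * RInt (fun t => sum_f_R0 (fun n => f n t) N) a b)) by ring.
  rewrite <- RInt_lin by auto. rewrite Rabs_Ropp.
  apply Rle_lt_trans with ((b - a) * T N).
  - apply abs_RInt_le_const; auto.
    + apply (ex_RInt_ext (fun x => 1 * F x - 1 * sum_f_R0 (fun n => f n x) N)).
      intros; reflexivity.
      apply (ex_RInt_minus (V:=R_CompleteNormedModule) (fun x => 1 * F x)); apply (ex_RInt_scal (V:=R_CompleteNormedModule)); auto.
    + intros t Ht. rewrite !Rmult_1_l. apply HT; auto.
  - specialize (HN0 N HN). unfold R_dist in HN0. rewrite Rminus_0_r in HN0.
    apply Rle_lt_trans with ((b - a) * Rabs (T N)).
    apply Rmult_le_compat_l. lra. apply Rle_abs.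
    apply Rle_lt_trans with ((b - a) * (eps / (b - a + 1))).
    apply Rmult_le_compat_l. lra. lra.
    apply (Rmult_lt_reg_r (b - a + 1)). lra. field_simplify; lra.
Qed.
Definition W (p q : nat) : R := RInt (fun t => sin t ^ p * cos t ^ q) 0 (PI/2).

Lemma ex_RInt_sc p q a b : ex_RInt (fun t => sin t ^ p * cos t ^ q) a b.
Proof. apply (ex_RInt_continuous (V:=R_CompleteNormedModule)); intros; apply (ex_derive_continuous (K:=R_AbsRing) (V:=R_NormedModule)); auto_derive; auto. Qed.

Lemma wallis p q : INR (S (S (p+q))) * W (S (S p)) q = INR (S p) * W p q.
Proof.
  pose (F := fun t => sin t ^ (S p) * cos t ^ (S q)).
  pose (dF := fun x => INR (S p) * (sin x ^ p * cos x ^ S (S q)) - INR (S q) * (sin x ^ S (S p) * cos x ^ q)).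
  assert (H : is_RInt dF 0 (PI/2) (minus (F (PI/2)) (F 0))).
  { apply (is_RInt_derive (V:=R_CompleteNormedModule) F dF).
    - intros x _. unfold F, dF. auto_derive; auto.
      change (match p with 0%nat => 1 | S _ => INR p + 1 end) with (INR (S p)).
      change (match q with 0%nat => 1 | S _ => INR q + 1 end) with (INR (S q)).
      simpl. ring.
    - intros x _. unfold dF. apply (ex_derive_continuous (K:=R_AbsRing) (V:=R_NormedModule)); auto_derive; auto. }
  replace (minus (F (PI/2)) (F 0)) with 0 in H by (unfold F, minus, plus, opp; simpl; rewrite cos_PI2, sin_0; ring).
  apply (is_RInt_unique (V:=R_CompleteNormedModule)) in H. unfold dF in H.
  rewrite RInt_lin in H by apply ex_RInt_sc.
  assert (E : RInt (fun x => sin x ^ p * cos x ^ S (S q)) 0 (PI/2) = W p q - W (S (S p)) q).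
  { unfold W. replace (RInt (fun t => sin t ^ p * cos t ^ q) 0 (PI/2) - RInt (fun t => sin t ^ S (S p) * cos t ^ q) 0 (PI/2))
     with (1 * RInt (fun t => sin t ^ p * cos t ^ q) 0 (PI/2) - 1 * RInt (fun t => sin t ^ S (S p) * cos t ^ q) 0 (PI/2)) by ring.
    rewrite <- RInt_lin by apply ex_RInt_sc. apply RInt_ext. intros. simpl.
    pose proof (sin2_cos2 x). unfold Rsqr in H1. 
    replace (cos x * (cos x * cos x ^ q)) with ((1 - sin x * sin x) * cos x ^ q) by (rewrite <- H1; ring). ring. }
  rewrite E in H. fold (W (S (S p)) q) in H.
  rewrite !S_INR, plus_INR in *. lra.
Qed.
Lemma PSeries_R a x : PSeries a x = Series (fun n => a n * x ^ n).
Proof. unfold PSeries. apply Series_ext. intros n. reflexivity. Qed.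

Lemma poch_pos a n : 0 < a -> 0 < poch a n.
Proof. intros Ha. induction n; simpl. lra. apply Rmult_lt_0_compat; auto. pose proof (pos_INR n). lra. Qed.

Lemma poch_nonneg a n : 0 <= a -> 0 <= poch a n.
Proof. intros Ha. induction n; simpl. lra. apply Rmult_le_pos; auto. pose proof (pos_INR n). lra. Qed.

Definition bc (a : R) (n : nat) := poch a n / INR (fact n).

Lemma bc_S a n : bc a (S n) * INR (S n) = (a + INR n) * bc a n.
Proof. unfold bc. simpl poch. rewrite fact_simpl, mult_INR. 
  pose proof (INR_fact_neq_0 n). pose proof (not_0_INR (S n) (Nat.neq_succ_0 n)). field. auto. Qed.

Lemma bc_pos a n : 0 < a -> 0 < bc a n.
Proof. intros. unfold bc. apply Rdiv_lt_0_compat. now apply poch_pos. apply lt_0_INR, lt_O_fact. Qed.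

Lemma bc_rad a : 0 < a -> CV_radius (bc a) = 1.
Proof.
  intros Ha. replace (Finite 1) with (Finite (/1)) by (f_equal; field).
  apply CV_radius_finite_DAlembert; [ | lra | ].
  - intros n. apply Rgt_not_eq, bc_pos, Ha.
  - apply is_lim_seq_ext with (fun n => (a + INR n) / INR (S n)).
    + intros n. assert (H := bc_S a n). assert (H0 := bc_pos a n Ha).
      pose proof (lt_0_INR (S n) (Nat.lt_0_succ n)). pose proof (pos_INR n).
      rewrite Rabs_pos_eq.
      * apply (Rmult_eq_reg_r (INR (S n) * bc a n)). 2: apply Rgt_not_eq; nra.
        field_simplify; [|lra|lra]. rewrite (Rmult_comm (INR (S n))), H. ring.
      * apply Rlt_le, Rdiv_lt_0_compat. apply bc_pos, Ha. auto.
    + apply is_lim_seq_ext with (fun n => 1 + (a - 1) * / INR (S n)).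
      * intros n. pose proof (lt_0_INR (S n) (Nat.lt_0_succ n)). rewrite S_INR in *. field. lra.
      * assert (L : is_lim_seq (fun n => (a-1) * / INR (S n)) 0).
        { replace (Finite 0) with (Rbar_mult (a-1) 0) by (simpl; f_equal; ring).
          apply is_lim_seq_scal_l.
          apply (is_lim_seq_incr_1 (fun n => / INR n)). replace (Finite 0) with (Rbar_inv p_infty) by reflexivity. apply is_lim_seq_inv. apply is_lim_seq_INR. discriminate. }
        replace (Finite 1) with (Finite (1+0)) by (f_equal; ring).
        apply is_lim_seq_plus'. apply is_lim_seq_const. exact L.
Qed.

Lemma bc_inside a t : 0 < a -> Rabs t < 1 -> Rbar_lt (Rabs t) (CV_radius (bc a)).
Proof. intros. rewrite bc_rad by auto. simpl. auto. Qed.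

Lemma exs_R (c : nat -> R) t : Rbar_lt (Rabs t) (CV_radius c) -> ex_series (fun n => c n * t ^ n).
Proof. intros H. apply (ex_series_Rabs (fun n => c n * t ^ n)). apply (CV_disk_inside c t H). Qed.

Lemma binom_ode a t : 0 < a -> Rabs t < 1 ->
  (1 - t) * PSeries (PS_derive (bc a)) t = a * PSeries (bc a) t.
Proof.
  intros Ha Ht.
  assert (Hu := exs_R (bc a) t (bc_inside a t Ha Ht)).
  assert (Hw : ex_series (fun n => PS_derive (bc a) n * t ^ n)).
  { apply exs_R. rewrite CV_radius_derive. apply bc_inside; auto. }
  rewrite !PSeries_R.
  set (d := Series (fun n => PS_derive (bc a) n * t ^ n)).
  assert (He : ex_series (fun n => INR n * bc a n * t ^ n)).
  { apply (ex_series_incr_1 (V:=R_NormedModule)).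
    apply (ex_series_ext (V:=R_NormedModule) (fun n => scal t (PS_derive (bc a) n * t ^ n))).
    - intros n. unfold PS_derive, scal; simpl. unfold mult; simpl. ring.
    - apply (ex_series_scal_l (V:=R_NormedModule)). exact Hw. }
  assert (E1 : Series (fun n => INR n * bc a n * t ^ n) = t * d).
  { rewrite Series_incr_1 by exact He. unfold d. rewrite <- Series_scal_l.
    simpl. rewrite Rmult_0_l, Rmult_0_l, Rplus_0_l. apply Series_ext. intros n.
    unfold PS_derive. simpl. ring. }
  assert (E2 : d = a * Series (fun n => bc a n * t ^ n) + Series (fun n => INR n * bc a n * t ^ n)).
  { rewrite <- Series_scal_l. rewrite <- Series_plus.
    - unfold d. apply Series_ext. intros n. unfold PS_derive. rewrite (Rmult_comm (INR (S n))), bc_S. ring.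
    - apply (ex_series_ext (V:=R_NormedModule) (fun n => scal a (bc a n * t ^ n))).
      intros; reflexivity. apply (ex_series_scal_l (V:=R_NormedModule)). exact Hu.
    - exact He. }
  rewrite E1 in E2. fold d. lra.
Qed.

Lemma binom_pos a v : 0 < a -> Rabs v < 1 -> PSeries (bc a) v = Rpower (1 - v) (- a).
Proof.
  intros Ha Hv.
  pose (g := fun t => PSeries (bc a) t * exp (a * ln (1 - t))).
  assert (Hd : forall t, Rabs t < 1 -> is_derive g t 0).
  { intros t Ht.
    assert (H1 := is_derive_PSeries (bc a) t (bc_inside a t Ha Ht)).
    assert (Ht' : 0 < 1 - t) by (apply Rabs_def2 in Ht; lra).
    assert (H2 : is_derive (fun t => exp (a * ln (1 - t))) t (- a * exp (a * ln (1-t)) / (1-t))).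
    { auto_derive. lra. replace (1 + - t) with (1 - t) by ring. field. lra. }
    assert (H3 := is_derive_mult _ _ t _ _ H1 H2 (fun n m => Rmult_comm n m)).
    unfold g. 
    replace (0 : R_NormedModule) with (plus (mult (PSeries (PS_derive (bc a)) t) (exp (a * ln (1 - t))))
             (mult (PSeries (bc a) t) (- a * exp (a * ln (1 - t)) / (1 - t)))).
    exact H3.
    unfold plus, mult; simpl. unfold mult; simpl.
    assert (E := binom_ode a t Ha Ht).
    replace (PSeries (PS_derive (bc a)) t) with (a * PSeries (bc a) t / (1 - t)).
    field. lra. rewrite <- E. field. lra. }
  assert (HI : is_RInt (fun _ => 0) 0 v (minus (g v) (g 0))).
  { apply (is_RInt_derive (V:=R_CompleteNormedModule) g (fun _ => 0)).
    - intros x Hx. apply Hd. apply Rabs_def1.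
      + apply Rle_lt_trans with (Rmax 0 v). lra. unfold Rmax. destruct (Rle_dec 0 v). apply Rabs_def2 in Hv; lra. lra.
      + apply Rlt_le_trans with (Rmin 0 v). 2: lra. unfold Rmin. destruct (Rle_dec 0 v). lra. apply Rabs_def2 in Hv; lra.
    - intros. apply continuous_const. }
  assert (HC := is_RInt_const (V:=R_NormedModule) 0 v 0).
  apply (is_RInt_unique (V:=R_CompleteNormedModule)) in HI.
  apply (is_RInt_unique (V:=R_CompleteNormedModule)) in HC.
  rewrite HI in HC. unfold minus, plus, opp, scal in HC; simpl in HC. unfold mult in HC; simpl in HC.
  unfold g in HC. rewrite PSeries_0 in HC. replace (bc a 0) with 1 in HC by (unfold bc; simpl; field). rewrite Rmult_0_r in HC.
  rewrite Rminus_0_r, ln_1, Rmult_0_r, exp_0 in HC.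
  rewrite Rpower_Ropp. unfold Rpower.
  assert (0 < exp (a * ln (1 - v))) by apply exp_pos.
  apply (Rmult_eq_reg_r (exp (a * ln (1 - v)))). 2: lra. rewrite Rinv_l by lra. lra.
Qed.

Lemma poch0 n : poch 0 (S n) = 0.
Proof. induction n. simpl. ring. simpl. simpl in IHn. rewrite IHn. ring. Qed.

Lemma binom a v : 0 <= a -> Rabs v < 1 -> PSeries (bc a) v = Rpower (1 - v) (- a).
Proof.
  intros Ha Hv. destruct (Rle_lt_or_eq_dec 0 a Ha) as [H|H]. now apply binom_pos.
  subst a. rewrite Ropp_0. unfold Rpower. rewrite Rmult_0_l, exp_0.
  rewrite PSeries_R. apply is_series_unique. apply is_series_Reals.
  assert (E : forall n, sum_f_R0 (fun n => bc 0 n * v ^ n) n = 1).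
  { induction n. simpl. unfold bc. simpl. field. simpl. rewrite IHn. unfold bc. rewrite poch0. 
    unfold Rdiv. ring. }
  intros eps Heps. exists 0%nat. intros n _. rewrite E. unfold R_dist. rewrite Rminus_diag, Rabs_R0. auto.
Qed.
Lemma moment p q n : W (p + 2 * n) q * poch ((INR p + INR q + 2) / 2) n = W p q * poch ((INR p + 1) / 2) n.
Proof.
  induction n.
  - simpl. rewrite Nat.add_0_r. ring.
  - simpl poch. replace (p + 2 * S n)%nat with (S (S (p + 2 * n))) by lia.
    assert (Hw := wallis (p + 2 * n) q).
    replace (p + 2 * n + q)%nat with (p + q + 2 * n)%nat in Hw by lia.
    rewrite !S_INR, !plus_INR, mult_INR in Hw. simpl INR in Hw.
    set (X := W (S (S (p + 2 * n))) q) in *. set (Y := W (p + 2 * n) q) in *.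
    set (P := poch ((INR p + INR q + 2) / 2) n) in *.
    transitivity (P * / 2 * ((INR p + INR q + (1+1) * INR n + 1 + 1) * X)). field.
    rewrite Hw. transitivity (/2 * (INR p + (1+1)*INR n + 1) * (Y * P)). ring. rewrite IHn. field.
Qed.

Lemma scalR (x y : R) : scal x y = x * y.
Proof. reflexivity. Qed.

Lemma RInt_scalR (k : R) (g : R -> R) a b : ex_RInt g a b -> RInt (fun x => k * g x) a b = k * RInt g a b.
Proof. intros H. apply is_RInt_unique.
  apply (is_RInt_scal (V:=R_CompleteNormedModule) g). now apply (RInt_correct (V:=R_CompleteNormedModule)). Qed.

Lemma pow_le1 x n : 0 <= x <= 1 -> x ^ n <= 1.
Proof. intros H. induction n; simpl. lra. replace 1 with (1 * 1) by ring. apply Rmult_le_compat; try lra. apply pow_le; lra. Qed.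

Lemma poch_mono a n : 0 <= a -> poch a n <= poch (a + 1) n.
Proof. intros H. induction n; simpl. lra. apply Rmult_le_compat. apply poch_nonneg; auto. pose proof (pos_INR n); lra. auto. lra. Qed.

Lemma bc_mono a n : 0 <= a -> 0 <= bc a n <= bc (a + 1) n.
Proof. intros H. unfold bc. pose proof (lt_0_INR _ (lt_O_fact n)). split.
  apply Rdiv_le_0_compat; auto. apply poch_nonneg; auto.
  unfold Rdiv. apply Rmult_le_compat_r. left; apply Rinv_0_lt_compat; auto. apply poch_mono; auto. Qed.

Lemma ex_bc a v : 0 <= a -> Rabs v < 1 -> ex_series (fun n => bc a n * v ^ n).
Proof.
  intros Ha Hv. apply (ex_series_Rabs (fun n => bc a n * v ^ n)).
  apply (ex_series_le (V:=R_CompleteNormedModule) _ (fun n => bc (a+1) n * Rabs v ^ n)).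
  - intros n. unfold norm; simpl; unfold abs; simpl. rewrite Rabs_Rabsolu, Rabs_mult, <- RPow_abs.
    destruct (bc_mono a n Ha). rewrite (Rabs_pos_eq (bc a n)) by auto.
    apply Rmult_le_compat_r. apply pow_le, Rabs_pos. auto.
  - apply exs_R. apply bc_inside. lra. rewrite Rabs_Rabsolu. auto.
Qed.

Lemma sin2_abs u t : Rabs u < 1 -> Rabs (u * sin t ^ 2) < 1.
Proof. intros H.
  rewrite Rabs_mult. rewrite <- RPow_abs. assert (Rabs (sin t) ^ 2 <= 1). apply pow_le1. split. apply Rabs_pos. apply Rabs_le, SIN_bound.
    assert (0 <= Rabs (sin t) ^ 2) by (apply pow_le, Rabs_pos). pose proof (Rabs_pos u). nra. Qed.

Lemma sin2_le u t : Rabs u < 1 -> 0 < 1 - u * sin t ^ 2.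
Proof. intros H. apply (sin2_abs u t) in H. apply Rabs_def2 in H. lra. Qed.

Lemma euler p q a u : 0 <= a -> Rabs u < 1 ->
  hyp2f1_series a ((INR p + 1)/2) ((INR p + INR q + 2)/2) u * W p q =
  RInt (fun t => sin t ^ p * cos t ^ q * Rpower (1 - u * sin t ^ 2) (-a)) 0 (PI/2).
Proof.
  intros Ha Hu.
  pose (f := fun n t => bc a n * u ^ n * (sin t ^ (p + 2 * n) * cos t ^ q)).
  pose (F := fun t => sin t ^ p * cos t ^ q * Rpower (1 - u * sin t ^ 2) (-a)).
  pose (m := fun n => bc (a + 1) n * Rabs u ^ n).
  assert (HS : is_series (fun n => RInt (f n) 0 (PI/2)) (RInt F 0 (PI/2))).
  { apply series_RInt with m.
    - pose proof PI_RGT_0. lra.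
    - intros n. unfold f. apply (ex_RInt_scal (V:=R_CompleteNormedModule) (fun t => sin t ^ (p + 2 * n) * cos t ^ q)). apply ex_RInt_sc.
    - apply (ex_RInt_continuous (V:=R_CompleteNormedModule)). intros t _. unfold F, Rpower.
      apply (ex_derive_continuous (K:=R_AbsRing) (V:=R_NormedModule)). auto_derive.
      pose proof (sin2_le u t Hu). simpl in H. lra.
    - intros n t _. unfold f, m. rewrite !Rabs_mult, <- !RPow_abs.
      destruct (bc_mono a n Ha). rewrite (Rabs_pos_eq (bc a n)) by auto.
      assert (Rabs (sin t) ^ (p + 2 * n) <= 1). apply pow_le1. split. apply Rabs_pos. apply Rabs_le, SIN_bound.
      assert (Rabs (cos t) ^ q <= 1). apply pow_le1. split. apply Rabs_pos. apply Rabs_le, COS_bound.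
      assert (0 <= Rabs (sin t) ^ (p + 2 * n)) by (apply pow_le, Rabs_pos).
      assert (0 <= Rabs (cos t) ^ q) by (apply pow_le, Rabs_pos).
      assert (0 <= Rabs u ^ n) by (apply pow_le, Rabs_pos).
      assert (0 <= Rabs (sin t) ^ (p + 2 * n) * Rabs (cos t) ^ q <= 1) by (split; [nra|]; nra).
      assert (0 <= bc a n * Rabs u ^ n) by nra.
      apply Rle_trans with (bc a n * Rabs u ^ n). nra. apply Rmult_le_compat_r; auto.
    - unfold m. apply exs_R. apply bc_inside. lra. rewrite Rabs_Rabsolu. auto.
    - intros t _. unfold F.
      assert (Hv : Rabs (u * sin t ^ 2) < 1) by (apply sin2_abs; auto).
      rewrite <- (binom a _ Ha Hv). rewrite PSeries_R.
      apply (is_series_ext (fun n => scal (sin t ^ p * cos t ^ q) (bc a n * (u * sin t ^ 2) ^ n))).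
      + intros n. unfold f. rewrite scalR, Rpow_mult_distr, pow_add, pow_mult. match goal with |- ?A = ?B => change (@eq R A B) end; ring.
      + apply (is_series_scal_l (V:=R_NormedModule)). apply Series_correct. apply ex_bc; auto. }
  apply is_series_unique in HS. unfold F in HS. rewrite <- HS.
  unfold hyp2f1_series. rewrite <- Series_scal_r. apply Series_ext. intros n.
  unfold f. rewrite RInt_scalR by apply ex_RInt_sc. fold (W (p + 2 * n) q).
  assert (Hm := moment p q n).
  assert (0 < poch ((INR p + INR q + 2) / 2) n). { apply poch_pos. pose proof (pos_INR p); pose proof (pos_INR q). lra. }

  replace (W (p + 2 * n) q) with (W p q * poch ((INR p + 1) / 2) n / poch ((INR p + INR q + 2) / 2) n).
  unfold bc. field. split. lra. apply INR_fact_neq_0.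
  rewrite <- Hm. field. lra.
Qed.
Lemma mono_lim (u : nat -> R) M : (forall n, u n <= u (S n)) -> (forall n, u n <= M) ->
  exists l : R, is_lim_seq u l /\ (forall n, u n <= l) /\ l <= M.
Proof.
  intros Hi Hb.
  destruct (growing_cv u) as [l Hl].
  - intros n. apply Hi.
  - exists M. intros y [i ->]. apply Hb.
  - apply is_lim_seq_Reals in Hl. exists l. split; auto. split.
    + intros n. apply (is_lim_seq_incr_compare u l Hl Hi).
    + assert (H := is_lim_seq_le u (fun _ => M) l M Hb Hl (is_lim_seq_const M)). simpl in H. auto.
Qed.

Lemma is_RInt3 (f1 f2 f3 : R -> R) c1 c2 c3 a b :
  ex_RInt f1 a b -> ex_RInt f2 a b -> ex_RInt f3 a b ->
  is_RInt (fun t => c1 * f1 t + c2 * f2 t + c3 * f3 t) a b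
    (c1 * RInt f1 a b + c2 * RInt f2 a b + c3 * RInt f3 a b).
Proof.
  intros H1 H2 H3.
  apply (is_RInt_plus (V:=R_CompleteNormedModule) (fun t => c1 * f1 t + c2 * f2 t)).
  apply (is_RInt_plus (V:=R_CompleteNormedModule) (fun t => c1 * f1 t)).
  all: apply (is_RInt_scal (V:=R_CompleteNormedModule)); now apply (RInt_correct (V:=R_CompleteNormedModule)).
Qed.

Lemma logconvex (g h : R -> R) a b k :
  a <= b ->
  (forall k, ex_RInt (fun t => g t * h t ^ k) a b) ->
  (forall t, a < t < b -> 0 <= g t) ->
  (forall t, a < t < b -> 0 <= h t) ->
  0 < RInt (fun t => g t * h t ^ S (S k)) a b ->
  RInt (fun t => g t * h t ^ S k) a b ^ 2 <= RInt (fun t => g t * h t ^ k) a b * RInt (fun t => g t * h t ^ S (S k)) a b.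
Proof.
  intros Hab Hex Hg Hh Hpos.
  set (J0 := RInt (fun t => g t * h t ^ k) a b).
  set (J1 := RInt (fun t => g t * h t ^ S k) a b).
  set (J2 := RInt (fun t => g t * h t ^ S (S k)) a b) in *.
  set (mu := J1 / J2).
  assert (HI := is_RInt3 _ _ _ 1 (-2 * mu) (mu ^ 2) a b (Hex k) (Hex (S k)) (Hex (S (S k)))).
  fold J0 J1 J2 in HI.
  assert (H0 : 0 <= 1 * J0 + -2 * mu * J1 + mu ^ 2 * J2).
  { rewrite <- (is_RInt_unique _ _ _ _ HI). apply RInt_ge_0; auto.
    eexists; eauto. intros t Ht. specialize (Hg t Ht).
    replace (1 * (g t * h t ^ k) + -2 * mu * (g t * h t ^ S k) + mu ^ 2 * (g t * h t ^ S (S k)))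
      with (g t * (h t ^ k * (1 - mu * h t) ^ 2)) by (simpl; ring).
    apply Rmult_le_pos; auto. apply Rmult_le_pos. apply pow_le; auto. apply pow2_ge_0. }
  unfold mu in H0. 
  apply (Rmult_le_compat_r J2) in H0; [|lra].
  replace ((1 * J0 + -2 * (J1 / J2) * J1 + (J1 / J2) ^ 2 * J2) * J2) with (J0 * J2 - J1 ^ 2) in H0 by (field; lra).
  lra.
Qed.



Definition Jr (g h : R -> R) (k : nat) : R := RInt (fun t => g t * h t ^ k) 0 (PI/2).

Lemma ratio_props (g h : R -> R) (M : R) :
  0 < M ->
  (forall k, ex_RInt (fun t => g t * h t ^ k) 0 (PI/2)) ->
  (forall t, 0 < t < PI/2 -> 0 <= g t /\ 0 <= h t /\ h t <= M) ->
  (forall k, 0 < Jr g h k) ->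
  exists l : R, is_lim_seq (fun k => Jr g h (S k) / Jr g h k) l
    /\ 0 < l <= M.
Proof.
  intros HM Hex Hb Hpos.
  assert (HPI : 0 <= PI/2) by (pose proof PI_RGT_0; lra).
  set (J := Jr g h).
  assert (Hm : forall k, J (S k) / J k <= J (S (S k)) / J (S k)).
  { intros k. assert (H := logconvex g h 0 (PI/2) k HPI Hex (fun t Ht => proj1 (Hb t Ht)) (fun t Ht => proj1 (proj2 (Hb t Ht))) (Hpos _)).
    change (J (S k) ^ 2 <= J k * J (S (S k))) in H.
    pose proof (Hpos k) as P0; pose proof (Hpos (S k)) as P1. fold J in P0, P1.
    apply (Rmult_le_reg_r (J k * J (S k))). nra.
    replace (J (S k) / J k * (J k * J (S k))) with (J (S k) ^ 2) by (field; lra).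
    replace (J (S (S k)) / J (S k) * (J k * J (S k))) with (J k * J (S (S k))) by (field; lra). auto. }
  assert (Hbd : forall k, J (S k) / J k <= M).
  { intros k. pose proof (Hpos k) as P0. fold J in P0.
    apply (Rmult_le_reg_r (J k)). auto. replace (J (S k) / J k * J k) with (J (S k)) by (field; lra).
    unfold J, Jr. rewrite <- RInt_scalR by apply Hex. apply RInt_le; auto.
    apply (ex_RInt_scal (V:=R_CompleteNormedModule) (fun t => g t * h t ^ k)). apply Hex.
    intros t Ht. destruct (Hb t Ht) as [H1 [H2 H3]]. simpl.
    assert (0 <= g t * h t ^ k) by (apply Rmult_le_pos; auto; apply pow_le; auto).
    replace (g t * (h t * h t ^ k)) with ((g t * h t ^ k) * h t) by ring.
    rewrite (Rmult_comm M). apply Rmult_le_compat_l; auto. }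
  destruct (mono_lim (fun k => J (S k) / J k) M Hm Hbd) as [l [Hl [Hge Hle]]].
  exists l. split. exact Hl. split; auto.
  apply Rlt_le_trans with (J 1%nat / J 0%nat); auto.
  apply Rdiv_lt_0_compat; apply Hpos.
Qed.

Lemma main_gen (x : R) (P : nat -> R) (g h h0 : R -> R) :
  0 < x ->
  (forall k, ex_RInt (fun t => g t * h t ^ k) 0 (PI/2)) ->
  (forall k, ex_RInt (fun t => g t * h0 t ^ k) 0 (PI/2)) ->
  (forall t, 0 < t < PI/2 -> 0 <= g t /\ 0 <= h t /\ x * h t <= 1 /\ 0 <= h0 t <= 1) ->
  (forall k, 0 < Jr g h k) ->
  (forall k, 0 < Jr g h0 k) ->
  is_lim_seq (fun k => Jr g h0 (S (S k)) / Jr g h0 k) (1/4) ->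
  (forall k, P k = Jr g h k / Jr g h0 k) ->
  exists L : R, is_lim_seq (fun k => Rabs (x * P (S k) / P k)) L /\ 0 <= L <= 2.
Proof.
  intros Hx Hexh Hexh0 Hb HJ HN Hq HP.
  destruct (ratio_props g h (/x)) as [lam [Hlam [Hl1 Hl2]]]; auto.
  { apply Rinv_0_lt_compat; auto. }
  { intros t Ht. destruct (Hb t Ht) as [A [B [C D]]]. repeat split; auto.
    apply (Rmult_le_reg_l x); auto. rewrite Rinv_r; lra. }
  destruct (ratio_props g h0 1) as [ell [Hell [He1 He2]]]; auto. lra.
  { intros t Ht. destruct (Hb t Ht) as [A [B [C D]]]. repeat split; tauto. }
  set (J := Jr g h) in *.
  set (N := Jr g h0) in *.
  assert (Hell2 : ell * ell = 1/4).
  { assert (H1 : is_lim_seq (fun k => N (S k) / N k * (N (S (S k)) / N (S k))) (ell * ell)).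
    { apply is_lim_seq_mult'. exact Hell. apply (is_lim_seq_incr_1 (fun k => N (S k) / N k)). exact Hell. }
    assert (H2 : is_lim_seq (fun k => N (S k) / N k * (N (S (S k)) / N (S k))) (1/4)).
    { apply is_lim_seq_ext with (2 := Hq). intros k. pose proof (HN k); pose proof (HN (S k)).
      field. lra. }
    apply is_lim_seq_unique in H1. apply is_lim_seq_unique in H2. rewrite H1 in H2. injection H2. auto. }
  assert (Hellv : ell = 1/2) by nra.
  exists (x * lam / ell). split.
  - apply is_lim_seq_ext with (fun k => x * (J (S k) / J k) / (N (S k) / N k)).
    + intros k. rewrite !HP.
      pose proof (HJ k); pose proof (HJ (S k)); pose proof (HN k); pose proof (HN (S k)).
      rewrite Rabs_pos_eq. field. repeat split; lra.
      apply Rmult_le_pos. apply Rmult_le_pos. lra. apply Rlt_le, Rdiv_lt_0_compat; auto.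
      apply Rlt_le, Rinv_0_lt_compat, Rdiv_lt_0_compat; auto.
    + assert (Hxl : is_lim_seq (fun k => x * (J (S k)/J k)) (x * lam)).
      { replace (Finite (x*lam)) with (Rbar_mult x lam) by reflexivity. apply is_lim_seq_scal_l. exact Hlam. }
      apply is_lim_seq_div'; auto. lra.
  - rewrite Hellv. split.
    + apply Rlt_le. apply Rdiv_lt_0_compat; nra.
    + apply (Rmult_le_compat_l x) in Hl2; [|lra]. rewrite Rinv_r in Hl2 by lra.
      replace (x * lam / (1/2)) with (2 * (x * lam)) by field. apply Rle_trans with (2*1). apply Rmult_le_compat_l. lra. exact Hl2. lra.
Qed.

Lemma W_q2 p q : W p (S (S q)) = W p q - W (S (S p)) q.
Proof.
  unfold W. replace (RInt (fun t => sin t ^ p * cos t ^ q) 0 (PI/2) - RInt (fun t => sin t ^ S (S p) * cos t ^ q) 0 (PI/2))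
     with (1 * RInt (fun t => sin t ^ p * cos t ^ q) 0 (PI/2) - 1 * RInt (fun t => sin t ^ S (S p) * cos t ^ q) 0 (PI/2)) by ring.
  rewrite <- RInt_lin by apply ex_RInt_sc. apply RInt_ext. intros. simpl.
  pose proof (sin2_cos2 x). unfold Rsqr in H0.
  replace (cos x * (cos x * cos x ^ q)) with ((1 - sin x * sin x) * cos x ^ q) by (rewrite <- H0; ring). ring.
Qed.

Lemma W_pos p q : 0 < W p q.
Proof.
  unfold W. apply RInt_gt_0. pose proof PI_RGT_0; lra.
  - intros t Ht. apply Rmult_lt_0_compat; apply pow_lt. apply sin_gt_0; lra. apply cos_gt_0; lra.
  - intros t _. apply (ex_derive_continuous (K:=R_AbsRing) (V:=R_NormedModule)); auto_derive; auto.
Qed.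

Lemma W_shift1 k : W (S (S k)) (S (S (S k))) = (INR k + 1) * (INR k + 2) / ((2 * INR k + 3) * (2 * INR k + 5)) * W k (S k).
Proof.
  assert (H1 := wallis k (S (S (S k)))).
  assert (H2 := W_q2 k (S k)).
  assert (H3 := wallis k (S k)).
  repeat rewrite S_INR in H1; repeat rewrite plus_INR in H1; repeat rewrite S_INR in H1.
  repeat rewrite S_INR in H3; repeat rewrite plus_INR in H3; repeat rewrite S_INR in H3.
  assert (P := pos_INR k).
  assert (EB : W (S (S k)) (S k) = (INR k + 1) / (2 * INR k + 3) * W k (S k)).
  { apply (Rmult_eq_reg_l (2 * INR k + 3)). 2: lra.
    replace ((2 * INR k + 3) * W (S (S k)) (S k)) with ((INR k + (INR k + 1) + 1 + 1) * W (S (S k)) (S k)) by ring.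
    rewrite H3. field. lra. }
  rewrite EB in H2.
  assert (ED : W (S (S k)) (S (S (S k))) = (INR k + 1) / (2 * INR k + 5) * W k (S (S (S k)))).
  { apply (Rmult_eq_reg_l (2 * INR k + 5)). 2: lra.
    replace ((2 * INR k + 5) * W (S (S k)) (S (S (S k)))) with ((INR k + (INR k + 1 + 1 + 1) + 1 + 1) * W (S (S k)) (S (S (S k)))) by ring.
    rewrite H1. field. lra. }
  rewrite ED, H2. field. lra.
Qed.

Lemma W_shift2 k : W (S (S (S k))) (S (S k)) = (INR k + 1) * (INR k + 2) / ((2 * INR k + 3) * (2 * INR k + 5)) * W (S k) k.
Proof.
  assert (H1 := wallis (S k) (S (S k))).
  assert (H2 := W_q2 (S k) k).
  assert (H3 := wallis (S k) k).
  repeat rewrite S_INR in H1; repeat rewrite plus_INR in H1; repeat rewrite S_INR in H1.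
  repeat rewrite S_INR in H3; repeat rewrite plus_INR in H3; repeat rewrite S_INR in H3.
  assert (P := pos_INR k).
  assert (EB : W (S (S (S k))) k = (INR k + 2) / (2 * INR k + 3) * W (S k) k).
  { apply (Rmult_eq_reg_l (2 * INR k + 3)). 2: lra.
    replace ((2 * INR k + 3) * W (S (S (S k))) k) with ((INR k + 1 + INR k + 1 + 1) * W (S (S (S k))) k) by ring.
    rewrite H3. field. lra. }
  rewrite EB in H2.
  assert (ED : W (S (S (S k))) (S (S k)) = (INR k + 2) / (2 * INR k + 5) * W (S k) (S (S k))).
  { apply (Rmult_eq_reg_l (2 * INR k + 5)). 2: lra.
    replace ((2 * INR k + 5) * W (S (S (S k))) (S (S k))) with ((INR k + 1 + (INR k + 1 + 1) + 1 + 1) * W (S (S (S k))) (S (S k))) by ring.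
    rewrite H1. field. lra. }
  rewrite ED, H2. field. lra.
Qed.

Lemma lim_half a b : 0 < b -> is_lim_seq (fun k => (INR k + a) / (2 * INR k + b)) (1/2).
Proof.
  intros Hb.
  assert (Heps : is_lim_seq (fun k => / INR (S k)) 0).
  { apply (is_lim_seq_incr_1 (fun n => / INR n)). replace (Finite 0) with (Rbar_inv p_infty) by reflexivity.
    apply is_lim_seq_inv. apply is_lim_seq_INR. discriminate. }
  apply is_lim_seq_ext with (fun k => (1 + (a - 1) * / INR (S k)) / (2 + (b - 2) * / INR (S k))).
  - intros k. pose proof (pos_INR k). rewrite S_INR. field. split; lra.
  - replace (1/2) with ((1 + (a-1)*0) / (2 + (b-2)*0)) by field.
    apply is_lim_seq_div'. 
    + apply is_lim_seq_plus'. apply is_lim_seq_const. apply is_lim_seq_mult'. apply is_lim_seq_const. auto.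
    + apply is_lim_seq_plus'. apply is_lim_seq_const. apply is_lim_seq_mult'. apply is_lim_seq_const. auto.
    + lra.
Qed.

Lemma lim_quarter : is_lim_seq (fun k => (INR k + 1) * (INR k + 2) / ((2 * INR k + 3) * (2 * INR k + 5))) (1/4).
Proof.
  apply is_lim_seq_ext with (fun k => (INR k + 1) / (2 * INR k + 3) * ((INR k + 2) / (2 * INR k + 5))).
  - intros k. pose proof (pos_INR k). field. split; lra.
  - replace (1/4) with (1/2 * (1/2)) by field. apply is_lim_seq_mult'; apply lim_half; lra.
Qed.

Lemma rp_pos B y : 0 < Rpower B y.
Proof. unfold Rpower. apply exp_pos. Qed.

Lemma rp_pow B k : 0 < B -> Rpower B (-(INR k / 2)) = (Rpower B (-1/2)) ^ k.
Proof. intros HB. rewrite <- Rpower_pow by apply rp_pos. rewrite Rpower_mult. f_equal. field. Qed.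

Lemma rp_sq B : 0 < B -> (Rpower B (-1/2)) ^ 2 = / B.
Proof. intros HB. rewrite <- Rpower_pow by apply rp_pos. rewrite Rpower_mult.
  replace (-1/2 * INR 2) with (- (1)) by (simpl; field). rewrite Rpower_Ropp, Rpower_1; auto. Qed.

Lemma bound_h x s c : 0 <= x -> 0 <= s -> 0 <= c -> s ^ 2 + c ^ 2 = 1 ->
  x * (s * c * Rpower (1 + x ^ 2 * s ^ 2) (-1/2)) <= 1.
Proof.
  intros Hx Hs Hc Hsc.
  assert (HB : 0 < 1 + x ^ 2 * s ^ 2) by (assert (0 <= x^2 * s^2) by (apply Rmult_le_pos; apply pow2_ge_0); lra).
  set (r := Rpower (1 + x ^ 2 * s ^ 2) (-1/2)).
  assert (Hr : 0 < r) by apply rp_pos.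
  assert (Hr2 : r ^ 2 = / (1 + x ^ 2 * s ^ 2)) by (apply rp_sq; auto).
  set (z := x * (s * c * r)).
  assert (Hz : 0 <= z) by (unfold z; repeat apply Rmult_le_pos; lra).
  assert (Hz2 : z ^ 2 <= 1).
  { unfold z. replace ((x * (s * c * r)) ^ 2) with (x^2 * s^2 * c^2 * r^2) by ring. rewrite Hr2.
    apply (Rmult_le_reg_r (1 + x ^ 2 * s ^ 2)); auto. field_simplify; try lra.
    assert (c ^ 2 <= 1) by (pose proof (pow2_ge_0 s); lra).
    assert (0 <= x^2 * s^2) by (apply Rmult_le_pos; apply pow2_ge_0).
    nra. }
  nra.
Qed.

Lemma sc_sq t : sin t ^ 2 + cos t ^ 2 = 1.
Proof. pose proof (sin2_cos2 t). unfold Rsqr in H. simpl. lra. Qed.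

Lemma Jr_h0_1 k : Jr cos (fun t => sin t * cos t) k = W k (S k).
Proof. unfold Jr, W. apply RInt_ext. intros t _. rewrite Rpow_mult_distr. simpl. ring. Qed.

Lemma Jr_h0_2 k : Jr sin (fun t => sin t * cos t) k = W (S k) k.
Proof. unfold Jr, W. apply RInt_ext. intros t _. rewrite Rpow_mult_distr. simpl. ring. Qed.

Lemma sc_bounds t : 0 < t < PI/2 -> 0 < sin t /\ 0 < cos t /\ sin t * cos t <= 1.
Proof. intros Ht. assert (0 < sin t) by (apply sin_gt_0; pose proof PI_RGT_0; lra).
  assert (0 < cos t) by (apply cos_gt_0; lra).
  pose proof (SIN_bound t). pose proof (COS_bound t). repeat split; auto. nra. Qed.

Lemma regime1 x : 0 < x -> x < 1 ->
  exists L : R,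
    is_lim_seq (fun k : nat => Rabs (x * Pk (S k) x / Pk k x)) (Finite L) /\ 0 <= L <= 2.
Proof.
  intros Hx0 Hx1.
  pose (h1 := fun t => sin t * cos t * Rpower (1 + x ^ 2 * sin t ^ 2) (-1/2)).
  assert (HB : forall t, 0 < 1 + x ^ 2 * sin t ^ 2).
  { intros t. assert (0 <= x^2 * sin t^2) by (apply Rmult_le_pos; apply pow2_ge_0). lra. }
  apply (main_gen x (fun k => Pk k x) cos h1 (fun t => sin t * cos t)); auto.
  - intros k. apply (ex_RInt_continuous (V:=R_CompleteNormedModule)). intros t _. unfold h1, Rpower.
    apply (ex_derive_continuous (K:=R_AbsRing) (V:=R_NormedModule)). auto_derive.
    specialize (HB t). simpl in HB. lra.
  - intros k. apply (ex_RInt_continuous (V:=R_CompleteNormedModule)). intros t _.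
    apply (ex_derive_continuous (K:=R_AbsRing) (V:=R_NormedModule)). auto_derive. auto.
  - intros t Ht. destruct (sc_bounds t Ht) as [Hs [Hc Hsc]]. pose proof (rp_pos (1 + x ^ 2 * sin t ^ 2) (-1/2)).
    repeat split; try lra.
    + unfold h1. repeat apply Rmult_le_pos; lra.
    + unfold h1. apply bound_h; try lra. apply sc_sq.
    + nra.
  - intros k. unfold Jr. apply RInt_gt_0. pose proof PI_RGT_0; lra.
    + intros t Ht. destruct (sc_bounds t Ht) as [Hs [Hc Hsc]]. apply Rmult_lt_0_compat; auto. apply pow_lt.
      unfold h1. repeat apply Rmult_lt_0_compat; auto. apply rp_pos.
    + intros t _. unfold h1, Rpower.
      apply (ex_derive_continuous (K:=R_AbsRing) (V:=R_NormedModule)). auto_derive.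
      specialize (HB t). simpl in HB. lra.
  - intros k. rewrite Jr_h0_1. apply W_pos.
  - apply is_lim_seq_ext with (fun k => (INR k + 1) * (INR k + 2) / ((2 * INR k + 3) * (2 * INR k + 5))).
    + intros k. rewrite !Jr_h0_1, W_shift1. pose proof (W_pos k (S k)). pose proof (pos_INR k). field. repeat split; nra.
    + apply lim_quarter.
  - intros k. rewrite Jr_h0_1. unfold Pk, hyp2f1.
    destruct (Rlt_dec (Rabs (- x ^ 2)) 1) as [Hlt|Hge].
    2: { exfalso. apply Hge. rewrite Rabs_Ropp, Rabs_pos_eq by apply pow2_ge_0. nra. }
    assert (HE := euler k (S k) (INR k / 2) (- x ^ 2)).
    replace ((INR k + INR (S k) + 2) / 2) with ((2 * INR k + 3) / 2) in HE by (rewrite S_INR; field).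
    pose proof (W_pos k (S k)).
    apply (Rmult_eq_reg_r (W k (S k))). 2: lra.
    rewrite HE. 2: { pose proof (pos_INR k). lra. } 2: auto.
    unfold Rdiv. rewrite Rmult_assoc, Rinv_l, Rmult_1_r by lra.
    unfold Jr. apply RInt_ext. intros t _.
    replace (1 - - x ^ 2 * sin t ^ 2) with (1 + x ^ 2 * sin t ^ 2) by ring.
    replace (- (INR k * / 2)) with (- (INR k / 2)) by reflexivity. rewrite rp_pow by auto. unfold h1. rewrite !Rpow_mult_distr. simpl. ring.
Qed.

Lemma regime2 x : 1 <= x ->
  exists L : R,
    is_lim_seq (fun k : nat => Rabs (x * Pk (S k) x / Pk k x)) (Finite L) /\ 0 <= L <= 2.
Proof.
  intros Hx1. assert (Hx0 : 0 < x) by lra.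
  pose (h2 := fun t => sin t * cos t * Rpower (1 + x ^ 2 * cos t ^ 2) (-1/2)).
  assert (HB : forall t, 0 < 1 + x ^ 2 * cos t ^ 2).
  { intros t. assert (0 <= x^2 * cos t^2) by (apply Rmult_le_pos; apply pow2_ge_0). lra. }
  apply (main_gen x (fun k => Pk k x) sin h2 (fun t => sin t * cos t)); auto.
  - intros k. apply (ex_RInt_continuous (V:=R_CompleteNormedModule)). intros t _. unfold h2, Rpower.
    apply (ex_derive_continuous (K:=R_AbsRing) (V:=R_NormedModule)). auto_derive.
    specialize (HB t). simpl in HB. lra.
  - intros k. apply (ex_RInt_continuous (V:=R_CompleteNormedModule)). intros t _.
    apply (ex_derive_continuous (K:=R_AbsRing) (V:=R_NormedModule)). auto_derive. auto.
  - intros t Ht. destruct (sc_bounds t Ht) as [Hs [Hc Hsc]]. pose proof (rp_pos (1 + x ^ 2 * cos t ^ 2) (-1/2)).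
    repeat split; try lra.
    + unfold h2. repeat apply Rmult_le_pos; lra.
    + unfold h2. rewrite (Rmult_comm (sin t)). apply bound_h; try lra. rewrite Rplus_comm. apply sc_sq.
    + nra.
  - intros k. unfold Jr. apply RInt_gt_0. pose proof PI_RGT_0; lra.
    + intros t Ht. destruct (sc_bounds t Ht) as [Hs [Hc Hsc]]. apply Rmult_lt_0_compat; auto. apply pow_lt.
      unfold h2. repeat apply Rmult_lt_0_compat; auto. apply rp_pos.
    + intros t _. unfold h2, Rpower.
      apply (ex_derive_continuous (K:=R_AbsRing) (V:=R_NormedModule)). auto_derive.
      specialize (HB t). simpl in HB. lra.
  - intros k. rewrite Jr_h0_2. apply W_pos.
  - apply is_lim_seq_ext with (fun k => (INR k + 1) * (INR k + 2) / ((2 * INR k + 3) * (2 * INR k + 5))).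
    + intros k. rewrite !Jr_h0_2, W_shift2. pose proof (W_pos (S k) k). pose proof (pos_INR k). field. repeat split; nra.
    + apply lim_quarter.
  - intros k. rewrite Jr_h0_2. unfold Pk, hyp2f1.
    destruct (Rlt_dec (Rabs (- x ^ 2)) 1) as [Hlt|Hge].
    { exfalso. rewrite Rabs_Ropp, Rabs_pos_eq in Hlt by apply pow2_ge_0. nra. }
    destruct (Rle_dec (- x ^ 2) (-1)) as [Hle|Hnle].
    2: { exfalso. apply Hnle. nra. }
    set (y := - x ^ 2 / (- x ^ 2 - 1)).
    assert (Hy : Rabs y < 1).
    { unfold y. replace (- x ^ 2 / (- x ^ 2 - 1)) with (x ^ 2 / (x ^ 2 + 1)) by (field; nra).
      rewrite Rabs_pos_eq. apply (Rmult_lt_reg_r (x^2+1)). nra. field_simplify; nra.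
      apply Rdiv_le_0_compat; nra. }
    assert (HE := euler (S k) k (INR k / 2) y).
    replace ((INR (S k) + INR k + 2) / 2) with ((2 * INR k + 3) / 2) in HE by (rewrite S_INR; field).
    replace ((INR (S k) + 1) / 2) with ((2 * INR k + 3) / 2 - (INR k + 1) / 2) in HE by (rewrite S_INR; field).
    pose proof (W_pos (S k) k).
    apply (Rmult_eq_reg_r (W (S k) k)). 2: lra.
    rewrite Rmult_assoc, HE. 2: { pose proof (pos_INR k). lra. } 2: auto.
    replace (Jr sin h2 k / W (S k) k * W (S k) k) with (Jr sin h2 k) by (field; lra).
    rewrite <- RInt_scalR.
    2: { apply (ex_RInt_continuous (V:=R_CompleteNormedModule)). intros t _. unfold Rpower.
         apply (ex_derive_continuous (K:=R_AbsRing) (V:=R_NormedModule)). auto_derive.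
         pose proof (sin2_le y t Hy). simpl in H0. lra. }
    unfold Jr. apply RInt_ext. intros t _.
    assert (Hyt := sin2_le y t Hy).
    replace (Rpower (1 - - x ^ 2) (- (INR k / 2)) * (sin t ^ S k * cos t ^ k * Rpower (1 - y * sin t ^ 2) (- (INR k / 2))))
      with (sin t ^ S k * cos t ^ k * (Rpower (1 - - x ^ 2) (- (INR k / 2)) * Rpower (1 - y * sin t ^ 2) (- (INR k / 2)))) by ring.
    rewrite Rpower_mult_distr by (try nra; auto).
    replace ((1 - - x ^ 2) * (1 - y * sin t ^ 2)) with (1 + x ^ 2 * cos t ^ 2).
    2: { unfold y. replace (cos t ^ 2) with (1 - sin t ^ 2) by (pose proof (sc_sq t); lra). field. nra. }
    rewrite rp_pow by auto. unfold h2. rewrite !Rpow_mult_distr. simpl. ring.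
Qed.

Theorem lemma3 (x : R) (hx : 0 <= x) :
  exists L : R,
    is_lim_seq (fun k : nat => Rabs (x * Pk (S k) x / Pk k x)) (Finite L)
    /\ 0 <= L <= 2.
Proof.
  destruct (Rle_lt_or_eq_dec 0 x hx) as [Hx|Hx].
  - destruct (Rlt_or_le x 1) as [H1|H1].
    + apply regime1; auto.
    + apply regime2; auto.
  - subst x. exists 0. split; [|lra].
    apply is_lim_seq_ext with (fun _ => 0).
    + intros k. unfold Rdiv. rewrite !Rmult_0_l, Rabs_R0. reflexivity.
    + apply is_lim_seq_const.
Qed.
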